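(* Let $(\mathbb{X},\oplus,\otimes,\mathbb{0},\mathbb{1})$ be a linearly ordered, algebraically complete idempotent semifield, and let $\bm{A}\in\mathbb{X}^{n\times n}$ be a reciprocal matrix (i.e. $\bm{A}^{-}=\bm{A}$) with no zero entries, with spectral radius $\lambda$, and let $\bm{A}_{\lambda}=\lambda^{-1}\bm{A}$. Consider the problem of minimizing $d(\bm{A},\bm{x}\bm{x}^{-})$ over all regular vectors $\bm{x}\in\mathbb{X}^{n}$. Then the minimum value equals $\lambda$, and the set of all solutions is $\{\bm{x}=\bm{A}_{\lambda}^{\ast}\bm{u}: \bm{u}\in\mathbb{X}^n,\ \bm{u}\neq\bm{0}\}$.
   Context: An idempotent semifield is a set $\mathbb{X}$ with associative, commutative operations $\oplus$ (addition) and $\otimes$ (multiplication, usually omitted in writing) with neutral elements $\mathbb{0}$ and $\mathbb{1}$, multiplication distributing over addition, idempotent addition ($x\oplus x=x$), and every nonzero $x$ having an inverse $x^{-1}$ with $xx^{-1}=\mathbb{1}$. It is assumed linearly ordered by the order $x\le y \iff x\oplus y=y$, and algebraically complete: $x^p=a$ is solvable for every $a$ and integer $p>0$, so rational powers are defined. Matrix and vector operations use the usual formulas with $\oplus,\otimes$ in place of $+,\times$; $\bm{0}$ is the zero vector; a vector is regular if it has no zero entries. For a nonzero column vector $\bm{x}=(x_i)$, $\bm{x}^{-}$ is the row vector with entries $x_i^{-1}$ if $x_i\ne\mathbb{0}$ and $\mathbb{0}$ otherwise. For a nonzero matrix $\bm{A}=(a_{ij})$, $\bm{A}^{-}=(a^{-}_{ij})$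 with $a^{-}_{ij}=a_{ji}^{-1}$ if $a_{ji}\neq\mathbb{0}$ and $\mathbb{0}$ otherwise. The trace is $\mathrm{tr}\,\bm{A}=a_{11}\oplus\cdots\oplus a_{nn}$. The distance between square matrices is $d(\bm{A},\bm{B})=\mathrm{tr}(\bm{B}^{-}\bm{A})\oplus\mathrm{tr}(\bm{A}^{-}\bm{B})$. $\bm{I}$ is the identity matrix, $\bm{A}^0=\bm{I}$, $\bm{A}^p=\bm{A}^{p-1}\bm{A}$. The spectral radius of $\bm{A}$ of order $n$ is $\lambda=\bigoplus_{k=1}^{n}\bigoplus_{1\le i_1,\ldots,i_k\le n}(a_{i_1i_2}a_{i_2i_3}\cdots a_{i_ki_1})^{1/k}$. For a square matrix $\bm{M}$ of order $n$, $\bm{M}^{\ast}=\bm{I}\oplus\bm{M}\oplus\cdots\oplus\bm{M}^{n-1}$. *)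

(* Defs.v *)
(* idempotent semifields modelled as commutative semirings
   (comNzSemiRingType) with extra hypotheses stated in the theorem. *)
From mathcomp Require Import all_boot all_order all_algebra.
Set Implicit Arguments. Unset Strict Implicit. Unset Printing Implicit Defensive.
Import GRing.Theory.
Local Open Scope ring_scope.

Section TropicalDefs.
Variable X : comNzSemiRingType.
Variable inv : X -> X.
(* root p a : the solution of x^p = a (the power a^{1/p}) *)
Variable root : nat -> X -> X.

Definition sle (x y : X) : Prop := x + y = y.

Definition vminus n (x : 'cV[X]_n) : 'rV[X]_n :=
  \row_i (if x i 0 == 0 then 0 else inv (x i 0)).

Definition mxminus m n (A : 'M[X]_(m, n)) : 'M[X]_(n, m) :=
  \matrix_(i, j) (if A j i == 0 then 0 else inv (A j i)).

Definition mxdist n (A B : 'M[X]_n) : X :=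
  \tr (mxminus B *m A) + \tr (mxminus A *m B).

Definition regular n (x : 'cV[X]_n) : Prop := forall i, x i 0 != 0.

Fixpoint mxpow n (A : 'M[X]_n) (p : nat) : 'M[X]_n :=
  match p with
  | 0 => 1%:M
  | p'.+1 => mxpow A p' *m A
  end.

Definition kleene n (M : 'M[X]_n) : 'M[X]_n := \sum_(k < n) mxpow M k.

(* spectral radius: (+)_{k=1}^n (+)_{i_1..i_k} (a_{i1 i2} ... a_{ik i1})^{1/k};
   a sequence i_1..i_k is a function s : 'I_k -> 'I_n, and ordS is the cyclic successor *)
Definition spec_radius n (A : 'M[X]_n) : X :=
  \sum_(k < n) \sum_(s : {ffun 'I_k.+1 -> 'I_n})
     root k.+1 (\prod_(j < k.+1) A (s j) (s (ordS j))).

Definition smul n (c : X) (A : 'M[X]_n) : 'M[X]_n := \matrix_(i, j) (c * A i j).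

End TropicalDefs.

(* Main.v *)
Require Import Defs.
From mathcomp Require Import all_boot all_order all_algebra.
From mathcomp Require Import ring zify.
Import GRing.Theory.
Local Open Scope ring_scope.

Section Trop.
Variable X : comNzSemiRingType.
Variable inv : X -> X.
Hypothesis Hidem : forall x : X, x + x = x.
Hypothesis Hinv : forall x : X, x != 0 -> x * inv x = 1.
Hypothesis Hlin : forall x y : X, x + y = x \/ x + y = y.
Implicit Types x y z c : X.

Lemma sle_refl x : sle x x. Proof. exact: Hidem. Qed.
Lemma sle_trans {x y z} : sle x y -> sle y z -> sle x z.
Proof. rewrite /sle => h1 h2; by rewrite -h2 addrA h1. Qed.
Lemma sle_anti x y : sle x y -> sle y x -> x = y.
Proof. rewrite /sle => h1 h2; by rewrite -h1 addrC h2. Qed.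
Lemma sle0 x : sle 0 x. Proof. by rewrite /sle add0r. Qed.
Lemma sle_addl x y : sle x (x + y). Proof. by rewrite /sle addrA Hidem. Qed.
Lemma sle_addr x y : sle y (x + y). Proof. by rewrite /sle addrCA Hidem. Qed.
Lemma sle_lub x y z : sle x z -> sle y z -> sle (x + y) z.
Proof. rewrite /sle => h1 h2; by rewrite -addrA h2 h1. Qed.
Lemma sle_mull c {x y} : sle x y -> sle (c * x) (c * y).
Proof. rewrite /sle => h; by rewrite -mulrDr h. Qed.
Lemma sle_mulr c {x y} : sle x y -> sle (x * c) (y * c).
Proof. rewrite /sle => h; by rewrite -mulrDl h. Qed.
Lemma sle_mul x y x' y' : sle x x' -> sle y y' -> sle (x * y) (x' * y').
Proof. move=> h1 h2; apply: (@sle_trans _ (x' * y)); [exact: sle_mulr|exact: sle_mull]. Qed.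

Lemma sle_sum (I : Type) (r : seq I) (P : pred I) (F : I -> X) c :
  (forall i, P i -> sle (F i) c) -> sle (\sum_(i <- r | P i) F i) c.
Proof.
move=> h; apply: (big_rec (fun y => sle y c)); first exact: sle0.
by move=> i y Pi hy; apply: sle_lub => //; apply: h.
Qed.
Lemma sle_term {I : finType} (F : I -> X) i : sle (F i) (\sum_j F j).
Proof. rewrite (bigD1 i) //=; exact: sle_addl. Qed.
Lemma sle_sum2 (I : finType) (F G : I -> X) :
  (forall i, sle (F i) (G i)) -> sle (\sum_i F i) (\sum_i G i).
Proof. move=> h; apply: sle_sum => i _; exact: sle_trans (h i) (sle_term _ i). Qed.
Lemma sle_prod {I : Type} {r : seq I} {P : pred I} {F G : I -> X} :
  (forall i, P i -> sle (F i) (G i)) ->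
  sle (\prod_(i <- r | P i) F i) (\prod_(i <- r | P i) G i).
Proof.
move=> h; apply: (big_ind2 (@sle X)); [exact: sle_refl| |exact: h].
by move=> ????; apply: sle_mul.
Qed.

Lemma mulf_neq0' (x y : X) : x != 0 -> y != 0 -> x * y != 0.
Proof.
move=> hx hy; apply/eqP => h; move/eqP: hy; apply.
by rewrite -[y]mul1r -(Hinv _ hx) (mulrC x) -mulrA h mulr0.
Qed.
Lemma inv_neq0 (x : X) : x != 0 -> inv x != 0.
Proof.
move=> hx; apply/eqP => h; have := Hinv _ hx; rewrite h mulr0 => /eqP.
by rewrite eq_sym oner_eq0.
Qed.
Lemma le_neq0 {x y : X} : sle x y -> x != 0 -> y != 0.
Proof. rewrite /sle => h hx; apply/eqP => hy; move: h; rewrite hy addr0 => h; by rewrite h eqxx in hx. Qed.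
Lemma sle_cancel c x y : c != 0 -> sle (c * x) (c * y) -> sle x y.
Proof.
move=> hc h; have := sle_mull (inv c) h.
by rewrite !mulrA !(mulrC (inv c)) Hinv // !mul1r.
Qed.
Lemma expr_neq0' {x : X} k : x != 0 -> x ^+ k != 0.
Proof. move=> hx; elim: k => [|k IH]; first by rewrite expr0 oner_eq0. by rewrite exprS mulf_neq0'. Qed.
Lemma inv_unique (x y : X) : x * y = 1 -> inv x = y.
Proof.
move=> h; have hx : x != 0 by apply/eqP => e; move: h; rewrite e mul0r => /eqP; rewrite eq_sym oner_eq0.
by rewrite -[inv x]mulr1 -h mulrA (mulrC (inv x)) Hinv // mul1r.
Qed.
Lemma sle_expr {x y : X} k : sle x y -> sle (x ^+ k) (y ^+ k).
Proof. move=> h; elim: k => [|k IH]; first by rewrite !expr0 /sle Hidem. by rewrite !exprS; apply: sle_mul. Qed.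
Lemma sle_eq0 (x : X) : sle x 0 -> x = 0.
Proof. by rewrite /sle addr0. Qed.

Lemma pow_cancel (p : nat) (x y : X) : (0 < p)%N -> sle (x ^+ p) (y ^+ p) -> sle x y.
Proof.
move=> hp h; case: (Hlin x y) => hxy; last by [].
have hyx : sle y x by rewrite /sle addrC.
have [y0|ny0] := eqVneq y 0.
  move: h; rewrite y0 expr0n (gtn_eqF hp) mulr0n => /sle_eq0 h.
  have [x0|nx0] := eqVneq x 0; first by rewrite x0 /sle Hidem.
  by move: (expr_neq0' p nx0); rewrite h eqxx.
set t := x * inv y.
have ht1 : sle 1 t by rewrite -(Hinv _ ny0); apply: sle_mulr.
have hx : x = t * y by rewrite /t -mulrA (mulrC (inv y)) Hinv // mulr1.
have htp : sle (t ^+ p) 1.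
  apply: (@sle_cancel (y ^+ p)); first exact: expr_neq0'.
  by rewrite mulr1 mulrC -exprMn -hx.
have htt : forall k, sle t (t ^+ k.+1).
  elim=> [|k IH]; first by rewrite expr1 /sle Hidem.
  apply: sle_trans IH _; rewrite [t ^+ k.+2]exprS -{1}(mul1r (t ^+ k.+1)); exact: sle_mulr.
have ht : t = 1.
  apply: sle_anti => //; apply: sle_trans (htt p.-1) _; by rewrite prednK.
by rewrite hx ht mul1r /sle Hidem.
Qed.

Variable root : nat -> X -> X.
Hypothesis Hroot : forall (p : nat) (a : X), (0 < p)%N -> root p a ^+ p = a.
Variable n : nat.
Hypothesis Hn : (0 < n)%N.
Variable A : 'M[X]_n.
Hypothesis Hrecip : mxminus inv A = A.
Hypothesis Hnz : forall i j, A i j != 0.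

Local Notation lam := (spec_radius root A).
Local Notation Bm := (smul (inv lam) A).

Lemma lam_term (k : 'I_n) (s : {ffun 'I_k.+1 -> 'I_n}) :
  sle (root k.+1 (\prod_(j < k.+1) A (s j) (s (ordS j)))) lam.
Proof.
rewrite /spec_radius.
apply: sle_trans (sle_term (fun k : 'I_n => \sum_(s : {ffun 'I_k.+1 -> 'I_n})
     root k.+1 (\prod_(j < k.+1) A (s j) (s (ordS j)))) k).
exact: (sle_term (fun s : {ffun 'I_k.+1 -> 'I_n} =>
     root k.+1 (\prod_(j < k.+1) A (s j) (s (ordS j)))) s).
Qed.

Lemma lam_neq0 : lam != 0.
Proof.
pose i0 := Ordinal Hn.
have := lam_term i0 [ffun _ => i0].
rewrite big_ord1 !ffunE.
have -> : root 1 (A i0 i0) = A i0 i0 by rewrite -{2}(Hroot 1 (A i0 i0) (ltn0Sn 0)) expr1.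
move/le_neq0; apply; exact: Hnz.
Qed.

Definition mu (x : 'cV[X]_n) := \sum_i \sum_j inv (x i 0) * A i j * x j 0.

Lemma mu_term (x : 'cV[X]_n) i j : sle (inv (x i 0) * A i j * x j 0) (mu x).
Proof.
apply: sle_trans (sle_term (fun i => \sum_j inv (x i 0) * A i j * x j 0) i).
exact: (sle_term (fun j => inv (x i 0) * A i j * x j 0) j).
Qed.

Lemma lam_le_mu (x : 'cV[X]_n) : regular x -> sle lam (mu x).
Proof.
move=> hx; rewrite /spec_radius; apply: sle_sum => k _; apply: sle_sum => s _.
apply: (@pow_cancel k.+1) => //; rewrite Hroot //.
set m := mu x.
have hA : forall a b, sle (A a b) (m * (x a 0 * inv (x b 0))).
  move=> a b; have := sle_mull (x a 0 * inv (x b 0)) (mu_term x a b).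
  have -> : x a 0 * inv (x b 0) * (inv (x a 0) * A a b * x b 0) =
     (x a 0 * inv (x a 0)) * (x b 0 * inv (x b 0)) * A a b by ring.
  by rewrite !Hinv // !mul1r mulrC.
apply: sle_trans (sle_prod (fun j _ => hA (s j) (s (ordS j)))) _.
rewrite big_split /= prodr_const card_ord big_split /=.
have -> : \prod_(i < k.+1) inv (x (s (ordS i)) 0) = \prod_(i < k.+1) inv (x (s i) 0).
  by rewrite [RHS](reindex_inj (@ordS_inj _)).
rewrite -big_split /= big1 ?mulr1 ?Hidem // => i _; exact: Hinv.
Qed.

Lemma vminusE (x : 'cV[X]_n) i j : regular x ->
  (x *m vminus inv x) i j = x i 0 * inv (x j 0).
Proof. by move=> hx; rewrite !mxE big_ord1 !mxE (negbTE (hx j)). Qed.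

Lemma dist_mu (x : 'cV[X]_n) : regular x -> mxdist inv A (x *m vminus inv x) = mu x.
Proof.
move=> hx; set M := x *m vminus inv x.
have hM : mxminus inv M = M.
  apply/matrixP => i j; rewrite mxE !vminusE //.
  have hne : x j 0 * inv (x i 0) != 0 by rewrite mulf_neq0' ?inv_neq0.
  rewrite (negbTE hne); apply: inv_unique.
  have -> : x j 0 * inv (x i 0) * (x i 0 * inv (x j 0)) =
     (x i 0 * inv (x i 0)) * (x j 0 * inv (x j 0)) by ring.
  by rewrite !Hinv // mul1r.
rewrite /mxdist hM Hrecip mxtrace_mulC Hidem /mxtrace /mu.
apply: eq_bigr => i _; rewrite mxE; apply: eq_bigr => j _; rewrite /M vminusE //; ring.
Qed.

Lemma BmE i j : Bm i j = inv lam * A i j.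
Proof. by rewrite mxE. Qed.

Lemma Bm_neq0 i j : Bm i j != 0.
Proof. by rewrite BmE mulf_neq0' // inv_neq0 // lam_neq0. Qed.

Lemma mu_le_lam (x : 'cV[X]_n) : regular x ->
  (sle (mu x) lam <-> forall i, sle ((Bm *m x) i 0) (x i 0)).
Proof.
move=> hx; have hl := lam_neq0; split.
  move=> h i; rewrite mxE; apply: sle_sum => j _.
  have := sle_mull (inv lam * x i 0) (sle_trans (mu_term x i j) h).
  have -> : inv lam * x i 0 * (inv (x i 0) * A i j * x j 0) =
      (x i 0 * inv (x i 0)) * (inv lam * A i j * x j 0) by ring.
  have -> : inv lam * x i 0 * lam = x i 0 by rewrite mulrC mulrA Hinv // mul1r.
  by rewrite Hinv // mul1r BmE.
move=> h; apply: sle_sum => i _; apply: sle_sum => j _.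
have := sle_mull (lam * inv (x i 0)) (sle_trans (sle_term (fun j => Bm i j * x j 0) j) (eq_ind _ (fun z => sle z (x i 0)) (h i) _ (mxE _ _ _ _))).
have -> : lam * inv (x i 0) * (Bm i j * x j 0) =
      (lam * inv lam) * (inv (x i 0) * A i j * x j 0) by rewrite BmE; ring.
rewrite Hinv // mul1r.
have -> : lam * inv (x i 0) * x i 0 = lam by rewrite -mulrA [inv (x i 0) * x i 0]mulrC Hinv // mulr1.
done.
Qed.

Definition wk (f : nat -> 'I_n) a b := \prod_(a <= t < b) Bm (f t) (f t.+1).

Lemma wk_split f a b d : (a <= b)%N -> (b <= d)%N -> wk f a d = wk f a b * wk f b d.
Proof. by move=> h1 h2; rewrite /wk (big_cat_nat h1 h2). Qed.

Lemma cycle_le1 (f : nat -> 'I_n) p q : f p = f q -> (p < q)%N -> (q - p <= n)%N ->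
  sle (wk f p q) 1.
Proof.
move=> hf hpq hqn.
have hk : ((q - p).-1 < n)%N by lia.
pose k := Ordinal hk.
have hL : (q - p = k.+1)%N by rewrite /= prednK //; lia.
pose s := [ffun j : 'I_k.+1 => f (p + j)].
have hP : \prod_(p <= t < q) A (f t) (f t.+1) = \prod_(j < k.+1) A (s j) (s (ordS j)).
  rewrite -{1}(add0n p) big_addn big_mkord hL; apply: eq_bigr => j _.
  rewrite !ffunE /= addnC; congr (A _ _).
  have hj := ltn_ord j.
  case: (ltngtP j.+1 k.+1) => h.
  - by rewrite modn_small //; congr f; lia.
  - lia.
  - rewrite h modnn; transitivity (f q); first by congr f; rewrite /= in h; lia.
    by rewrite -hf; congr f; lia.
have hw : wk f p q = inv lam ^+ (q - p) * \prod_(p <= t < q) A (f t) (f t.+1).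
  by rewrite /wk -prodr_const_nat -big_split /=; apply: eq_bigr => t _; rewrite BmE.
have hpow : sle (\prod_(p <= t < q) A (f t) (f t.+1)) (lam ^+ (q - p)).
  rewrite hP hL -{1}(Hroot k.+1 (\prod_(j < k.+1) A (s j) (s (ordS j))) (ltn0Sn k)).
  exact: sle_expr (lam_term k s).
rewrite hw; apply: sle_trans (sle_mull _ hpow) _.
rewrite -exprMn mulrC Hinv ?lam_neq0 // expr1n; exact: sle_refl.
Qed.

Lemma wk_lower m (f : nat -> 'I_n) : sle (wk f 0 m) (mxpow Bm m (f 0%N) (f m)).
Proof.
elim: m => [|m IH].
  by rewrite /wk big_geq //= mxE eqxx /sle mulr1n Hidem.
rewrite /wk big_nat_recr //= -/(wk f 0 m) [X in sle _ X]mxE.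
apply: sle_trans (sle_term (fun k => mxpow Bm m (f 0%N) k * Bm k (f m.+1)) (f m)).
apply: sle_mul => //; exact: sle_refl.
Qed.

Lemma wk_upper m i j c :
  (forall f : nat -> 'I_n, f 0%N = i -> f m = j -> sle (wk f 0 m) c) ->
  sle (mxpow Bm m i j) c.
Proof.
elim: m j c => [|m IH] j c h.
  rewrite /= mxE; case: eqP => [e|_].
    by rewrite mulr1n; have := h (fun _ => i) erefl e; rewrite /wk big_geq.
  rewrite mulr0n; exact: sle0.
rewrite /= mxE; apply: sle_sum => k _.
have hb := Bm_neq0 k j.
suff hs : sle (mxpow Bm m i k) (c * inv (Bm k j)).
  apply: sle_trans (sle_mulr (Bm k j) hs) _.
  rewrite -mulrA (mulrC (inv _)) Hinv // mulr1; exact: sle_refl.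
apply: IH => f f0 fm.
pose g := fun t => if (t <= m)%N then f t else j.
have g0 : g 0%N = i by rewrite /g leq0n.
have gm : g m.+1 = j by rewrite /g ltnn.
have := h g g0 gm.
rewrite /wk big_nat_recr //= -/(wk g 0 m).
have -> : wk g 0 m = wk f 0 m.
  apply: eq_big_nat => t ht; rewrite /g ifT; last by lia.
  by rewrite ifT //; lia.
rewrite /g leqnn ltnn fm => hle.
have := sle_mulr (inv (Bm k j)) hle.
by rewrite -mulrA Hinv // mulr1.
Qed.

Lemma wk_kleene m (f : nat -> 'I_n) : sle (wk f 0 m) (kleene Bm (f 0%N) (f m)).
Proof.
elim/ltn_ind: m f => m IH f.
case: (ltnP m n) => hm.
  rewrite /kleene summxE; apply: sle_trans (wk_lower m f) _.
  exact: (sle_term (fun k : 'I_n => mxpow Bm k (f 0%N) (f m)) (Ordinal hm)).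
pose g := fun t : 'I_n.+1 => f t.
have : ~~ injectiveb g.
  apply/negP => /injectiveP inj; have := leq_card _ inj; rewrite !card_ord; lia.
move/injectivePn => [t1 [t2 hne heq]].
have [p [q [hpq [hqn hf]]]] : exists p q, (p < q)%N /\ (q <= n)%N /\ f p = f q.
  case: (ltngtP t1 t2) => h.
  - exists t1, t2; split => //; split => //; by have := ltn_ord t2.
  - exists t2, t1; split => //; split => //; by have := ltn_ord t1.
  - by move: hne; rewrite (val_inj h) eqxx.
pose d := (q - p)%N.
pose m2 := (m - d)%N.
pose f2 := fun t => if (t <= p)%N then f t else f (t + d)%N.
have hm2 : (m2 < m)%N by rewrite /m2 /d; lia.
have IH2 := IH m2 hm2 f2.
have f20 : f2 0%N = f 0%N by rewrite /f2 leq0n.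
have f2m : f2 m2 = f m.
  rewrite /f2; case: ifP => h.
    have -> : m2 = p by rewrite /m2 /d in h *; lia.
    by rewrite hf; congr f; rewrite /m2 /d in h *; lia.
  by congr f; rewrite /m2 /d; lia.
rewrite f20 f2m in IH2.
apply: sle_trans IH2.
have e1 : wk f 0 m = wk f 0 p * wk f p q * wk f q m.
  by rewrite (@wk_split f 0 q m) // ?(@wk_split f 0 p q) //; lia.
have e2 : wk f2 0 m2 = wk f 0 p * wk f q m.
  rewrite (@wk_split f2 0 p m2) //; last by rewrite /m2 /d; lia.
  congr (_ * _).
    apply: eq_big_nat => t ht; rewrite /f2 ifT; last by lia.
    by rewrite ifT //; lia.
  have hq : q = (p + d)%N by rewrite /d; lia.
  rewrite /wk hq big_addn; apply: eq_big_nat => t ht.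
  rewrite /f2 [(t.+1 <= p)%N]leqNgt; have -> : (p < t.+1)%N by lia.
  rewrite /=; case: ifP => h.
    have -> : t = p by lia.
    by rewrite addSn -hq hf.
  by rewrite addSn.
rewrite e1 e2; apply: sle_mul; last exact: sle_refl.
rewrite -{2}(mulr1 (wk f 0 p)); apply: sle_mull.
apply: cycle_le1 => //; lia.
Qed.

Lemma mxpow_kleene m i j : sle (mxpow Bm m i j) (kleene Bm i j).
Proof. apply: wk_upper => f <- <-; exact: wk_kleene. Qed.

Lemma mxpow_comm k : Bm *m mxpow Bm k = mxpow Bm k *m Bm.
Proof.
elim: k => [|k IH] /=; first by rewrite mulmx1 mul1mx.
by rewrite mulmxA IH.
Qed.

Lemma Bm_kleene i j : sle ((Bm *m kleene Bm) i j) (kleene Bm i j).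
Proof.
rewrite /kleene mulmx_sumr summxE; apply: sle_sum => k _.
rewrite mxpow_comm; exact: (mxpow_kleene k.+1).
Qed.

Lemma kleene_neq0 i j : kleene Bm i j != 0.
Proof.
rewrite /kleene summxE.
have [e|ne] := eqVneq i j.
  apply: (le_neq0 (sle_term (fun k : 'I_n => mxpow Bm k i j) (Ordinal Hn))).
  by rewrite /= mxE e eqxx mulr1n oner_eq0.
have h1 : (1 < n)%N.
  rewrite ltnNge; apply/negP => h; move/eqP: ne; apply; apply: val_inj.
  change (nat_of_ord i = nat_of_ord j); have := ltn_ord i; have := ltn_ord j; lia.
apply: (le_neq0 (sle_term (fun k : 'I_n => mxpow Bm k i j) (Ordinal h1))).
by rewrite /= mul1mx; exact: Bm_neq0.
Qed.

Lemma mulmx_mono_r (M : 'M[X]_n) (y z : 'cV[X]_n) :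
  (forall i, sle (y i 0) (z i 0)) -> forall i, sle ((M *m y) i 0) ((M *m z) i 0).
Proof. move=> h i; rewrite !mxE; apply: sle_sum2 => j; exact: sle_mull. Qed.

Lemma mulmx_mono_l (M N : 'M[X]_n) (y : 'cV[X]_n) :
  (forall i j, sle (M i j) (N i j)) -> forall i, sle ((M *m y) i 0) ((N *m y) i 0).
Proof. move=> h i; rewrite !mxE; apply: sle_sum2 => j; exact: sle_mulr. Qed.

Lemma back (u : 'cV[X]_n) : u != 0 ->
  regular (kleene Bm *m u) /\ mu (kleene Bm *m u) = lam.
Proof.
move=> hu.
have [j0 hj0] : exists j, u j 0 != 0.
  case: (pickP (fun j => u j 0 != 0)) => [j0 h|hall]; first by exists j0.
  move/eqP: hu; case; apply/matrixP => i k; rewrite (ord1 k) mxE.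
  by move: (hall i) => /negbFE/eqP.
have hreg : regular (kleene Bm *m u).
  move=> i; rewrite mxE.
  apply: (le_neq0 (sle_term (fun j => kleene Bm i j * u j 0) j0)).
  by rewrite mulf_neq0' // kleene_neq0.
split => //; apply: sle_anti; last exact: lam_le_mu.
apply/(mu_le_lam _ hreg) => i.
rewrite mulmxA; apply: mulmx_mono_l => {}i j; exact: Bm_kleene.
Qed.

Lemma main_sec :
  (forall x : 'cV[X]_n, regular x ->
      sle lam (mxdist inv A (x *m vminus inv x))) /\
  (exists x : 'cV[X]_n, regular x /\ mxdist inv A (x *m vminus inv x) = lam) /\
  (forall x : 'cV[X]_n,
      (regular x /\ mxdist inv A (x *m vminus inv x) = lam) <->
      (exists u : 'cV[X]_n, u != 0 /\ x = kleene Bm *m u)).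
Proof.
split; first by move=> x hx; rewrite dist_mu //; exact: lam_le_mu.
split.
  have hu : (const_mx 1 : 'cV[X]_n) != 0.
    apply/eqP => h; have := congr1 (fun M : 'cV[X]_n => M (Ordinal Hn) 0) h.
    by rewrite !mxE => /eqP; rewrite oner_eq0.
  have [hr hm] := back _ hu.
  by exists (kleene Bm *m const_mx 1); rewrite dist_mu.
move=> x; split.
  move=> [hx hd]; rewrite dist_mu // in hd.
  have hB : forall i, sle ((Bm *m x) i 0) (x i 0).
    by apply/(mu_le_lam _ hx); rewrite hd; exact: sle_refl.
  have hpow : forall k i, sle ((mxpow Bm k *m x) i 0) (x i 0).
    elim=> [|k IH] i; first by rewrite /= mul1mx; exact: sle_refl.
    rewrite /= -mulmxA; apply: sle_trans (mulmx_mono_r (mxpow Bm k) _ _ hB i) _; exact: IH.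
  exists x; split.
    apply/eqP => h0; have := hx (Ordinal Hn); by rewrite h0 mxE eqxx.
  apply/matrixP => i j; rewrite (ord1 j); apply: sle_anti.
    rewrite /kleene mulmx_suml summxE.
    apply: sle_trans (sle_term (fun k : 'I_n => (mxpow Bm k *m x) i 0) (Ordinal Hn)).
    by rewrite /= mul1mx; exact: sle_refl.
  rewrite /kleene mulmx_suml summxE; apply: sle_sum => k _; exact: hpow.
move=> [u [hu ->]]; have [hr hm] := back _ hu; by rewrite dist_mu.
Qed.
End Trop.

Theorem corollary1
  (X : comNzSemiRingType) (inv : X -> X) (root : nat -> X -> X)
  (Hidem : forall x : X, x + x = x)
  (Hinv : forall x : X, x != 0 -> x * inv x = 1)
  (Hlin : forall x y : X, x + y = x \/ x + y = y)
  (Hroot : forall (p : nat) (a : X), (0 < p)%N -> root p a ^+ p = a)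
  (n : nat) (Hn : (0 < n)%N) (A : 'M[X]_n)
  (Hrecip : mxminus inv A = A)
  (Hnz : forall i j, A i j != 0) :
  let lambda := spec_radius root A in
  let Alam := smul (inv lambda) A in
  (forall x : 'cV[X]_n, regular x ->
      sle lambda (mxdist inv A (x *m vminus inv x))) /\
  (exists x : 'cV[X]_n, regular x /\ mxdist inv A (x *m vminus inv x) = lambda) /\
  (forall x : 'cV[X]_n,
      (regular x /\ mxdist inv A (x *m vminus inv x) = lambda) <->
      (exists u : 'cV[X]_n, u != 0 /\ x = kleene Alam *m u)).
Proof.
move=> lambda Alam.
exact: (@main_sec X inv Hidem Hinv Hlin root Hroot n Hn A Hrecip Hnz).
Qed.
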